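(* In the setting described in the context, consider the optimization problem $$\max_{\boldsymbol\alpha}\ \min_{(i,\theta_b)\in\Xi}W_i(\theta_b)G_i(\theta_b)\quad\text{subject to}\quad\sum_{i=1}^k\sum_{b=1}^B\alpha_i(\theta_b)=1,\ \alpha_i(\theta_b)\ge0.$$ An allocation $\boldsymbol\alpha$ is optimal for this problem if and only if it satisfies all of the following: (i) (global balance) for all $1\le b\le B$, $\ \alpha_{i^b}^2(\theta_b)/\lambda_{i^b}^2(\theta_b)=\sum_{i\ne i^b,\,i\ne i^*}\alpha_i^2(\theta_b)/\lambda_i^2(\theta_b)$; (ii) (pairwise balance) for all $(i,\theta_b),(j,\theta_{b'})\in\Xi$, $\ W_i(\theta_b)G_i(\theta_b)=W_j(\theta_{b'})G_j(\theta_{b'})$; (iii) $\alpha_{i^*}(\theta_b)=0$ for all $\theta_b\notin\Theta_{i^*}$.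
   Context: There are $k\ge2$ solutions and $B$ parameter values $\theta_1,\dots,\theta_B$ with probabilities $p_1,\dots,p_B>0$, $\sum_bp_b=1$. For each $i,b$, $y_i(\theta_b)$ is a real number (mean simulation output) and $\lambda_i(\theta_b)>0$ (simulation standard deviation). Each $i^b=\arg\min_iy_i(\theta_b)$ is assumed unique, and $i^*=\arg\max_i\sum_bp_b\mathbf 1\{i=i^b\}$ is assumed unique. Favorable sets: $\Theta_i=\{\theta_b:i^b=i\}$. For an allocation $\boldsymbol\alpha=(\alpha_i(\theta_b))$ and $i\ne i^b$, $$G_i(\theta_b)=\frac{(y_i(\theta_b)-y_{i^b}(\theta_b))^2}{2\left(\lambda_i^2(\theta_b)/\alpha_i(\theta_b)+\lambda_{i^b}^2(\theta_b)/\alpha_{i^b}(\theta_b)\right)},$$ with $G_i(\theta_b)=0$ if $\alpha_i(\theta_b)=0$ or $\alpha_{i^b}(\theta_b)=0$. Let $d_j=\sum_bp_b\mathbf 1\{i^*=i^b\}-\sum_bp_b\mathbf 1\{j=i^b\}$ and $\Xi=\{(i,\theta_b):i\ne i^*,i\ne i^b\}$. Balance weights for $(i,\theta_b)\in\Xi$: $$W_i(\theta_b)=\begin{cases}\max\left\{\min\left(\min_{j\ne i^*}d_j,\ d_i/2\right)/p_b,\ 1\right\},&\theta_b\in\Theta_{i^*},\\ \max\{d_i/p_b,1\},&\theta_b\notin\Theta_{i^*}.\end{cases}$$ *)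

(* Defs.v *)
From mathcomp Require Import all_boot all_order all_algebra.
Set Implicit Arguments. Unset Strict Implicit. Unset Printing Implicit Defensive.
Import Order.TTheory GRing.Theory Num.Theory.
Local Open Scope ring_scope.

Section Setting.
Variables (R : realFieldType) (k B : nat).
Variables (p : 'I_B -> R) (y lam : 'I_k -> 'I_B -> R).
Variables (ib : 'I_B -> 'I_k) (istar : 'I_k).

Definition feasible (alpha : 'I_k -> 'I_B -> R) : Prop :=
  (\sum_(i < k) \sum_(b < B) alpha i b = 1) /\ (forall i b, 0 <= alpha i b).

Definition G (alpha : 'I_k -> 'I_B -> R) (i : 'I_k) (b : 'I_B) : R :=
  if (alpha i b == 0) || (alpha (ib b) b == 0) then 0
  else (y i b - y (ib b) b) ^+ 2 /
       (2 * (lam i b ^+ 2 / alpha i b + lam (ib b) b ^+ 2 / alpha (ib b) b)).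

(* probability mass of the favorable set Theta_j *)
Definition mass (j : 'I_k) : R := \sum_(b < B | ib b == j) p b.

Definition d (j : 'I_k) : R := mass istar - mass j.

Definition inXi (x : 'I_k * 'I_B) : bool := (x.1 != istar) && (x.1 != ib x.2).

Definition W (i : 'I_k) (b : 'I_B) : R :=
  if ib b == istar then
    Num.max (Num.min (\big[Num.min/ (d i / 2)]_(j < k | j != istar) d j)
                     (d i / 2) / p b) 1
  else Num.max (d i / p b) 1.

Definition WG (alpha : 'I_k -> 'I_B -> R) (x : 'I_k * 'I_B) : R :=
  W x.1 x.2 * G alpha x.1 x.2.

(* min_{x in Xi} WG alpha x <= min_{x in Xi} WG beta x, written out
   (Xi is finite and nonempty) *)
Definition obj_le (alpha beta : 'I_k -> 'I_B -> R) : Prop :=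
  exists2 x, inXi x & forall z, inXi z -> WG alpha x <= WG beta z.

Definition optimal (alpha : 'I_k -> 'I_B -> R) : Prop :=
  feasible alpha /\ forall beta, feasible beta -> obj_le beta alpha.

End Setting.

(* Main.v *)
Require Import Defs.
From mathcomp Require Import all_boot all_order all_algebra.
From mathcomp Require Import ring lra.
Import Order.TTheory GRing.Theory Num.Theory.
Local Open Scope ring_scope.
Set Implicit Arguments. Unset Strict Implicit.

Section Proof3.
Variables (R : realFieldType) (k B : nat).
Variables (p : 'I_B -> R) (y lam : 'I_k -> 'I_B -> R).
Variables (ib : 'I_B -> 'I_k) (istar : 'I_k).
Hypothesis hk : (2 <= k)%N.
Hypothesis hp : forall b, 0 < p b.
Hypothesis hpsum : \sum_(b < B) p b = 1.
Hypothesis hlam : forall i b, 0 < lam i b.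
Hypothesis hib : forall b i, i != ib b -> y (ib b) b < y i b.
Hypothesis histar : forall j, j != istar -> mass p ib j < mass p ib istar.

Local Notation Gf := (G y lam ib).
Local Notation WGf := (WG p y lam ib istar).
Local Notation Xi := (inXi ib istar).
Local Notation Wf := (W p ib istar).

Definition den (a : 'I_k -> 'I_B -> R) i b :=
  lam i b ^+ 2 / a i b + lam (ib b) b ^+ 2 / a (ib b) b.
Definition cst i b := (y i b - y (ib b) b) ^+ 2.

Lemma W_gt0 i b : 0 < Wf i b.
Proof.
apply: (@lt_le_trans _ _ 1) => //.
by rewrite /W; case: ifP => _; rewrite le_max lexx orbT.
Qed.

Lemma L2_gt0 i b : 0 < lam i b ^+ 2.
Proof. exact: exprn_gt0. Qed.

Lemma cst_gt0 i b : i != ib b -> 0 < cst i b.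
Proof.
move=> h; rewrite /cst exprn_even_gt0 //= subr_eq0 gt_eqF //; exact: hib.
Qed.

Lemma den_gt0 a i b : 0 < a i b -> 0 < a (ib b) b -> 0 < den a i b.
Proof.
move=> h1 h2; rewrite /den addr_gt0 // divr_gt0 //; exact: L2_gt0.
Qed.

Lemma G_eq a i b : a i b != 0 -> a (ib b) b != 0 ->
  Gf a i b = cst i b / (2 * den a i b).
Proof. by move=> h1 h2; rewrite /G (negbTE h1) (negbTE h2). Qed.

Lemma G_ne0 a i b : Gf a i b != 0 -> a i b != 0 /\ a (ib b) b != 0.
Proof. by rewrite /G; case: ifP => [_|/norP[]//]; rewrite eqxx. Qed.

Lemma G_ext a c i b : a i b = c i b -> a (ib b) b = c (ib b) b ->
  Gf a i b = Gf c i b.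
Proof. by move=> h1 h2; rewrite /G h1 h2. Qed.

Lemma G_ge0 a i b : 0 <= a i b -> 0 <= a (ib b) b -> 0 <= Gf a i b.
Proof.
move=> h1 h2; rewrite /G; case: ifP => // _.
by rewrite divr_ge0 ?sqr_ge0 // mulr_ge0 ?addr_ge0 ?divr_ge0 ?sqr_ge0.
Qed.

Lemma G_gt0 a i b : i != ib b -> 0 < a i b -> 0 < a (ib b) b -> 0 < Gf a i b.
Proof.
move=> hi h1 h2; rewrite G_eq ?gt_eqF // divr_gt0 ?cst_gt0 // mulr_gt0 //.
exact: den_gt0.
Qed.

Lemma G_hom a t i b : 0 < t ->
  Gf (fun i b => t * a i b) i b = t * Gf a i b.
Proof.
move=> ht; rewrite /G !mulf_eq0 (gt_eqF ht) /=.
case: ifP => _; first by rewrite mulr0.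
rewrite !invfM.
have -> : lam i b ^+ 2 * (t^-1 * (a i b)^-1) + lam (ib b) b ^+ 2 * (t^-1 * (a (ib b) b)^-1)
  = t^-1 * (lam i b ^+ 2 * (a i b)^-1 + lam (ib b) b ^+ 2 * (a (ib b) b)^-1) by ring.
rewrite !invfM invrK; ring.
Qed.

Lemma Gle_den a c i b : i != ib b -> 0 < a i b -> 0 < a (ib b) b ->
  0 < c i b -> 0 < c (ib b) b ->
  (Gf a i b <= Gf c i b) = (den c i b <= den a i b).
Proof.
move=> hi h1 h2 h3 h4; rewrite !G_eq ?gt_eqF // ler_pM2l ?cst_gt0 //.
rewrite lef_pV2 ?posrE ?mulr_gt0 ?den_gt0 // ler_pM2l //.
Qed.

Lemma Glt_den a c i b : i != ib b -> 0 < a i b -> 0 < a (ib b) b ->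
  0 < c i b -> 0 < c (ib b) b ->
  (Gf a i b < Gf c i b) = (den c i b < den a i b).
Proof.
move=> hi h1 h2 h3 h4; rewrite !G_eq ?gt_eqF // ltr_pM2l ?cst_gt0 //.
rewrite ltf_pV2 ?posrE ?mulr_gt0 ?den_gt0 // ltr_pM2l //.
Qed.

Lemma G_mono a c i b : i != ib b -> 0 <= a i b -> a i b <= c i b ->
  0 <= a (ib b) b -> a (ib b) b <= c (ib b) b -> Gf a i b <= Gf c i b.
Proof.
move=> hi h1 h1' h2 h2'.
have [e1|n1] := eqVneq (a i b) 0.
  have -> : Gf a i b = 0 by rewrite /G e1 eqxx.
  by apply: G_ge0; [rewrite (le_trans h1) | rewrite (le_trans h2)].
have [e2|n2] := eqVneq (a (ib b) b) 0.
  have -> : Gf a i b = 0 by rewrite /G e2 eqxx orbT.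
  by apply: G_ge0; [rewrite (le_trans h1) | rewrite (le_trans h2)].
have p1 : 0 < a i b by rewrite lt_def n1.
have p2 : 0 < a (ib b) b by rewrite lt_def n2.
have p3 : 0 < c i b by exact: (lt_le_trans p1).
have p4 : 0 < c (ib b) b by exact: (lt_le_trans p2).
rewrite Gle_den //.
rewrite /den; apply: lerD; by rewrite ler_pM2l ?L2_gt0 // lef_pV2 ?posrE.
Qed.


Local Notation SS f := (\sum_(i0 < k) \sum_(b0 < B) f i0 b0).

Lemma entry_le_sum (f : 'I_k -> 'I_B -> R) i b : (forall i b, 0 <= f i b) ->
  f i b <= SS f.
Proof.
move=> h; rewrite (bigD1 i) //= (bigD1 b) //= -addrA lerDl.
by rewrite addr_ge0 // sumr_ge0 // => *; rewrite sumr_ge0.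
Qed.

Lemma sum_col (f g : 'I_k -> 'I_B -> R) b0 :
  (forall i b, b != b0 -> g i b = f i b) ->
  SS g = SS f + \sum_(i < k) (g i b0 - f i b0).
Proof.
move=> h; have E : SS g - SS f = \sum_(i < k) (g i b0 - f i b0).
  rewrite -sumrB; apply: eq_bigr => i _; rewrite -sumrB (bigD1 b0) //= big1 ?addr0 //.
  by move=> b hb; rewrite h // subrr.
by rewrite -E addrC subrK.
Qed.

Lemma sum_pt (f g : 'I_k -> 'I_B -> R) i0 b0 :
  (forall i b, (i != i0) || (b != b0) -> g i b = f i b) ->
  SS g = SS f + (g i0 b0 - f i0 b0).
Proof.
move=> h; rewrite (@sum_col f g b0) => [|i b hb]; last by rewrite h // hb orbT.
congr (_ + _); rewrite (bigD1 i0) //= big1 ?addr0 // => i hi.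
by rewrite h ?subrr // hi.
Qed.

Lemma B_gt0 : (0 < B)%N.
Proof.
rewrite lt0n; apply/eqP => hB0.
have : \sum_(b < B) p b = 0.
  by apply: big1 => -[b hb]; exfalso; move: hb; rewrite hB0.
by rewrite hpsum => /eqP; rewrite oner_eq0.
Qed.

Lemma unif_feas : feasible (fun (_ : 'I_k) (_ : 'I_B) => ((k * B)%:R : R)^-1).
Proof.
split; last by move=> *; rewrite invr_ge0 ler0n.
rewrite !sumr_const !card_ord -mulrnA mulnC.
set c := (_ : R)^-1; rewrite -mulr_natr /c mulVf //.
by rewrite pnatr_eq0 -lt0n muln_gt0 B_gt0 (leq_trans _ hk).
Qed.

Lemma ex_j : exists j : 'I_k, j != istar.
Proof.
have h0 : (0 < k)%N by apply: leq_trans hk.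
have [e|n] := eqVneq istar (Ordinal h0).
  by exists (Ordinal hk); rewrite e; apply/eqP => -[].
by exists (Ordinal h0); rewrite eq_sym.
Qed.

Lemma ex_bstar : exists b, ib b = istar.
Proof.
case: (boolP [exists b, ib b == istar]) => [/existsP[b /eqP hb]|/existsPn hn].
  by exists b.
have [j hj] := ex_j; have := histar hj.
have -> : mass p ib istar = 0 by apply: big1 => b hb; move: (hn b); rewrite hb.
by rewrite ltNge sumr_ge0 // => b _; rewrite ltW.
Qed.

Lemma Xi_ex : exists x, Xi x.
Proof.
have [j hj] := ex_j; have [b hb] := ex_bstar.
by exists (j, b); rewrite /inXi /= hb hj.
Qed.

Lemma WG_ne0 a x : WGf a x != 0 -> Gf a x.1 x.2 != 0.
Proof. by rewrite /WG mulf_eq0 negb_or => /andP[]. Qed.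

Lemma improve a m c : optimal p y lam ib istar a -> Xi m -> 0 < WGf a m ->
  (forall i b, 0 <= c i b) -> SS c < 1 ->
  (forall z, Xi z -> WGf a m <= WGf c z) -> False.
Proof.
move=> [_ hopt] hm hWm hc0 hs hz.
have hWc : 0 < WGf c m by apply: lt_le_trans hWm (hz m hm).
have hne : WGf c m != 0 by rewrite gt_eqF.
have [hc1 _] := @G_ne0 c m.1 m.2 (@WG_ne0 c m hne).
have hcp : 0 < c m.1 m.2 by rewrite lt_def hc1 hc0.
have s_pos : 0 < SS c := lt_le_trans hcp (@entry_le_sum c m.1 m.2 hc0).
set s := SS c in s_pos hs.
have hfe : feasible (fun i b => s^-1 * c i b).
  split; last by move=> i b; apply: mulr_ge0; [rewrite invr_ge0 ltW | exact: hc0].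
  under eq_bigr do rewrite -mulr_sumr.
  by rewrite -mulr_sumr mulVf ?gt_eqF.
have [x hx hle] := hopt _ hfe.
have := hle m hm.
have -> : WGf (fun i b => s^-1 * c i b) x = s^-1 * WGf c x.
  by rewrite /WG G_hom ?invr_gt0 // mulrCA.
have hWx : 0 < WGf c x by apply: lt_le_trans hWm (hz x hx).
have hmx := hz x hx.
have hss : s * s^-1 = 1 by rewrite mulfV ?gt_eqF.
have hsi : 0 < s^-1 by rewrite invr_gt0.
move=> h.
have : WGf c x * s^-1 <= WGf c x by rewrite mulrC; exact: le_trans h hmx.
nra.
Qed.


Local Notation opt := (optimal p y lam ib istar).

Lemma Xi_ne x : Xi x -> x.1 != ib x.2 /\ x.1 != istar.
Proof. by case/andP. Qed.

Lemma opt_pos a : opt a -> forall z, Xi z -> 0 < WGf a z.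
Proof.
move=> [ha hopt] z hz; have [x hx hle] := hopt _ unif_feas.
apply: lt_le_trans (hle z hz).
have hu : 0 < ((k * B)%:R : R)^-1.
  by rewrite invr_gt0 ltr0n muln_gt0 B_gt0 (leq_trans _ hk).
have [hx1 _] := Xi_ne hx.
by rewrite /WG mulr_gt0 ?W_gt0 // G_gt0.
Qed.

Lemma opt_min a : opt a -> exists2 m, Xi m & forall z, Xi z -> WGf a m <= WGf a z.
Proof. by move=> [ha hopt]; apply: hopt. Qed.

Lemma opt_entry a x : opt a -> Xi x -> 0 < a x.1 x.2 /\ 0 < a (ib x.2) x.2.
Proof.
move=> ho hx; have [[_ ha0] _] := ho.
have hW := opt_pos ho hx.
have hne : WGf a x != 0 by rewrite gt_eqF.
have [h1 h2] := @G_ne0 a x.1 x.2 (@WG_ne0 a x hne).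
by rewrite !lt_def h1 h2 !ha0.
Qed.

Lemma nec3 a : opt a -> forall b0, ib b0 != istar -> a istar b0 = 0.
Proof.
move=> ho b0 hb0; apply/eqP/negPn/negP => hne.
have [[hsum ha0] _] := ho; have [m hm hmin] := opt_min ho.
have hap : 0 < a istar b0 by rewrite lt_def hne ha0.
apply: (@improve a m (fun i b => if (i == istar) && (b == b0) then 0 else a i b)
  ho hm (opt_pos ho hm)).
- by move=> i b; case: ifP.
- rewrite (@sum_pt a _ istar b0); last first.
    move=> i b h; case: ifP => // /andP[/eqP e1 /eqP e2].
    by move: h; rewrite e1 e2 !eqxx.
  rewrite !eqxx /= hsum; lra.
- move=> z hz; apply: le_trans (hmin z hz) _.
  have [h1 h2] := Xi_ne hz.
  rewrite le_eqVlt; apply/orP; left; apply/eqP; rewrite /WG; congr (_ * _).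
  apply: G_ext; first by rewrite (negbTE h2).
  case: ifP => // /andP[/eqP e1 /eqP e2].
  by move: hb0; rewrite -e2 e1 eqxx.
Qed.

Lemma nec2_m a m : opt a -> Xi m -> (forall z, Xi z -> WGf a m <= WGf a z) ->
  forall x, Xi x -> WGf a x = WGf a m.
Proof.
move=> ho hm hmin x hx.
have [[hsum ha0] _] := ho.
apply/eqP; rewrite eq_le hmin // andbT leNgt; apply/negP => hlt.
have hWm := opt_pos ho hm; have hWx := opt_pos ho hx.
set r := WGf a m / WGf a x.
have hr0 : 0 < r by rewrite divr_gt0.
have hr1 : r < 1 by rewrite ltr_pdivrMr // mul1r.
have [hx1 hx2] := Xi_ne hx.
have [hax hab] := opt_entry ho hx.
apply: (@improve a m (fun i b => if (i == x.1) && (b == x.2) then r * a i b else a i b)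
  ho hm hWm).
- by move=> i b; case: ifP => _; [apply: mulr_ge0; [exact: ltW | exact: ha0] | exact: ha0].
- rewrite (@sum_pt a _ x.1 x.2); last first.
    move=> i b h; case: ifP => // /andP[/eqP e1 /eqP e2].
    by move: h; rewrite e1 e2 !eqxx.
  rewrite !eqxx /= hsum.
  have : (r - 1) * a x.1 x.2 < 0 by rewrite pmulr_llt0 // subr_lt0.
  lra.
- move=> z hz; have [hz1 hz2] := Xi_ne hz.
  have [->|hzx] := eqVneq z x.
    have E : WGf a m = Wf x.1 x.2 * Gf (fun i b => r * a i b) x.1 x.2.
      rewrite G_hom // mulrCA.
      have -> : Wf x.1 x.2 * Gf a x.1 x.2 = WGf a x by [].
      by rewrite /r divfK ?gt_eqF.
    rewrite E /WG ler_pM2l ?W_gt0 //.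
    have hr0' := ltW hr0.
    apply: G_mono => //.
    - exact: mulr_ge0 hr0' (ha0 _ _).
    - by rewrite !eqxx.
    - exact: mulr_ge0 hr0' (ha0 _ _).
    - rewrite eq_sym (negbTE hx1) /=.
      have := ha0 (ib x.2) x.2; clearbody r; nra.
  apply: le_trans (hmin z hz) _.
  rewrite le_eqVlt; apply/orP; left; apply/eqP; rewrite /WG; congr (_ * _).
  apply: G_ext.
    case: ifP => // /andP[/eqP e1 /eqP e2].
    by move: hzx; rewrite [z]surjective_pairing [x]surjective_pairing e1 e2 eqxx.
  case: ifP => // /andP[/eqP e1 /eqP e2].
  by move: hx1; rewrite -e2 e1 eqxx.
Qed.

Lemma nec2 a : opt a -> forall x z, Xi x -> Xi z -> WGf a x = WGf a z.
Proof.
move=> ho x z hx hz; have [m hm hmin] := opt_min ho.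
by rewrite (nec2_m ho hm hmin hx) (nec2_m ho hm hmin hz).
Qed.


Lemma tang (L a e : R) : 0 < L -> 0 < a -> -1/2 <= e * a / L ->
  L / (a * (1 - e*a/L + 2 * (e*a/L)^+2)) <= L / a + e.
Proof.
move=> hL ha hx.
have hq : 0 < 1 - e*a/L + 2 * (e*a/L)^+2 by nra.
rewrite ler_pdivrMr ?mulr_gt0 //.
have -> : (L / a + e) * (a * (1 - e*a/L + 2 * (e*a/L) ^+ 2)) =
   L * ((1 + e*a/L) * (1 - e*a/L + 2 * (e*a/L)^+2)).
  field; rewrite ?gt_eqF //.
rewrite ler_pMr //; nra.
Qed.

Lemma delta_eq (a L e : R) : 0 < L ->
  a * (1 - e*a/L + 2*(e*a/L)^+2) - a = - e * (a^+2 / L) + 2 * e^+2 * (a^+3 / L^+2).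
Proof. move=> hL. field. by rewrite gt_eqF. Qed.

Lemma q_gt0 (x : R) : 0 < 1 - x + 2 * x^+2.
Proof. nra. Qed.

Lemma nec1 a : opt a -> forall b0 : 'I_B,
  a (ib b0) b0 ^+ 2 / lam (ib b0) b0 ^+ 2 =
  \sum_(i < k | (i != ib b0) && (i != istar)) a i b0 ^+ 2 / lam i b0 ^+ 2.
Proof.
move=> ho b0; have [[hsum ha0] _] := ho; have [m hm hmin] := opt_min ho.
have XiS : forall i, (i != ib b0) && (i != istar) -> Xi (i, b0).
  by move=> i /andP[h1 h2]; rewrite /inXi /= h1 h2.
have [e0|ne0] := eqVneq (a (ib b0) b0) 0.
  rewrite e0 expr0n /= mul0r; symmetry; apply: big1 => i hi.
  have [_ h] := opt_entry ho (XiS i hi).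
  by move: h; rewrite /= e0 ltxx.
have hab : 0 < a (ib b0) b0 by rewrite lt_def ne0 ha0.
apply/eqP; apply: contraT => hD.
set ab := a (ib b0) b0 in hab hD *.
set Lb := lam (ib b0) b0 ^+ 2 in hD *.
have hLb : 0 < Lb by exact: L2_gt0.
set Q := \sum_(i < k | _) _ in hD.
set D := ab ^+ 2 / Lb - Q.
have hD0 : D != 0 by rewrite subr_eq0.
set MS := \sum_(i < k | (i != ib b0) && (i != istar)) a i b0 ^+ 3 / (lam i b0 ^+ 2) ^+ 2.
set NS := \sum_(i < k | (i != ib b0) && (i != istar)) a i b0 / lam i b0 ^+ 2.
have hlam0 : forall i b, 0 <= lam i b by move=> i b; exact: ltW.
have hMS : 0 <= MS by rewrite /MS; apply: sumr_ge0 => i _; rewrite divr_ge0 ?exprn_ge0 ?ha0.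
have hNS : 0 <= NS by rewrite /NS; apply: sumr_ge0 => i _; rewrite divr_ge0 ?exprn_ge0 ?ha0.
set M := ab ^+ 3 / Lb ^+ 2 + MS.
set N := ab / Lb + NS.
have hMb : 0 < ab ^+ 3 / Lb ^+ 2 by rewrite divr_gt0 ?exprn_gt0.
have hM : 0 < M by rewrite /M ltr_wpDr.
have hNb : 0 <= ab / Lb by rewrite divr_ge0 ?ltW.
have hN : 0 <= N by rewrite addr_ge0.
set A := `|D|.
have hA : 0 <= A by rewrite normr_ge0.
have hDA1 : D <= A by rewrite /A ler_norm.
have hDA2 : - A <= D by rewrite lerNl /A -normrN ler_norm.
have hden : 0 < 4 * (M + A * N) by rewrite mulr_gt0 // ltr_wpDr // mulr_ge0.
set eta := (4 * (M + A * N))^-1.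
have heta : 0 < eta by rewrite invr_gt0.
have heq : 4 * (eta * M) + 4 * (A * (eta * N)) = 1.
  have h := mulVf (negbT (gt_eqF hden)); rewrite -/eta in h.
  by apply: etrans h; rewrite /eta; ring.
have hetaN : 0 <= A * (eta * N) by rewrite mulr_ge0 // mulr_ge0 // ltW.
have hetaM : 0 <= eta * M by rewrite mulr_ge0 // ltW.
set e := - D * eta.
have hbound : forall t, 0 <= t -> t <= N -> -1/2 <= e * t /\ e * t <= 1/2.
  move=> t ht0 htN.
  have h1 : 0 <= eta * t by rewrite mulr_ge0 // ltW.
  have h2 : A * (eta * t) <= A * (eta * N) by rewrite ler_wpM2l // ler_wpM2l // ltW.
  have h3 : D * (eta * t) <= A * (eta * t) by rewrite ler_wpM2r.
  have h4 : - A * (eta * t) <= D * (eta * t) by rewrite ler_wpM2r.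
  have -> : e * t = - (D * (eta * t)) by rewrite /e; ring.
  have h5 : - A * (eta * t) = - (A * (eta * t)) by ring.
  split; lra.
have htS : forall i, (i != ib b0) && (i != istar) -> 0 <= a i b0 / lam i b0 ^+ 2 <= N.
  move=> i hi; rewrite divr_ge0 ?ha0 ?exprn_ge0 ?hlam0 //=.
  rewrite /N /NS (bigD1 i) //= addrCA lerDl addr_ge0 //.
  by apply: sumr_ge0 => j _; rewrite divr_ge0 ?exprn_ge0 ?ha0 ?ltW.
set c := fun i b => if b == b0 then
    (if i == ib b0 then ab * (1 - (-e)*ab/Lb + 2*((-e)*ab/Lb)^+2)
     else if i != istar then a i b0 * (1 - e * a i b0 / lam i b0 ^+ 2 + 2 * (e * a i b0 / lam i b0 ^+ 2)^+2)
     else a i b0)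
  else a i b.
suff : False by [].
apply: (@improve a m c ho hm (opt_pos ho hm)).
- move=> i b; rewrite /c; case: ifP => _; last exact: ha0.
  case: ifP => _; first by apply: mulr_ge0; [exact: ltW | exact: ltW (q_gt0 _)].
  by case: ifP => _; [apply: mulr_ge0; [exact: ha0 | exact: ltW (q_gt0 _)] | exact: ha0].
- rewrite (@sum_col a c b0); last by move=> i b hb; rewrite /c (negbTE hb).
  rewrite hsum.
  have E : \sum_(i < k) (c i b0 - a i b0) = e * D + 2 * e ^+ 2 * M.
    rewrite (bigD1 (ib b0)) //= (bigID (fun i => i != istar)) /=.
    rewrite [X in _ + (_ + X)]big1 ?addr0; last first.
      move=> i /andP[h1 h2]; rewrite /c eqxx (negbTE h1) (negbTE h2) subrr //.
    rewrite /c !eqxx /=.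
    rewrite (eq_bigr (fun i => - e * (a i b0 ^+ 2 / lam i b0 ^+ 2) +
        2 * e ^+ 2 * (a i b0 ^+ 3 / (lam i b0 ^+ 2) ^+ 2))); last first.
      move=> i /andP[h1 h2]; rewrite (negbTE h1) h2 delta_eq //; exact: L2_gt0.
    rewrite big_split /= -!mulr_sumr -/Q -/MS /M /D.
    have -> : (- e) * ab / Lb = - (e * ab / Lb) by ring.
    rewrite -/ab; field; rewrite ?gt_eqF //.
  rewrite E.
  have -> : e * D + 2 * e ^+ 2 * M = (D ^+ 2 * eta) * (2 * (eta * M) - 1) by rewrite /e; ring.
  have hD2 : 0 < D ^+ 2 * eta by rewrite mulr_gt0 // exprn_even_gt0.
  have : (D ^+ 2 * eta) * (2 * (eta * M) - 1) < 0 by rewrite pmulr_rlt0 //; lra.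
  lra.
- case=> i b hz; apply: le_trans (hmin _ hz) _.
  have [eb|nb] := eqVneq b b0; last first.
    rewrite le_eqVlt; apply/orP; left; apply/eqP; rewrite /WG /=; congr (_ * _).
    by apply: G_ext; rewrite /c (negbTE nb).
  subst b.
  have [hi1 hi2] := Xi_ne hz; simpl in hi1, hi2.
  have hiS : (i != ib b0) && (i != istar) by rewrite hi1 hi2.
  have [hai _] := opt_entry ho hz; simpl in hai.
  rewrite /WG /= ler_pM2l ?W_gt0 //.
  have /andP[ht0 htN] := htS i hiS.
  have [hx1 _] := hbound _ ht0 htN.
  have hbN : ab / Lb <= N by rewrite /N lerDl.
  have [_ hy1] := hbound _ hNb hbN.
  have hci : c i b0 = a i b0 * (1 - e * a i b0 / lam i b0 ^+ 2 + 2 * (e * a i b0 / lam i b0 ^+ 2)^+2).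
    by rewrite /c eqxx (negbTE hi1) hi2.
  have hcb : c (ib b0) b0 = ab * (1 - (-e)*ab/Lb + 2*((-e)*ab/Lb)^+2).
    by rewrite /c !eqxx.
  rewrite Gle_den // ?hci ?hcb ?mulr_gt0 ?q_gt0 //.
  rewrite /den hci hcb -/ab -/Lb.
  have hx1' : -1/2 <= e * a i b0 / lam i b0 ^+ 2 by rewrite -mulrA.
  have hy1' : -1/2 <= (-e) * ab / Lb by rewrite -mulrA mulNr; lra.
  have T1 := tang (L2_gt0 i b0) hai hx1'.
  have T2 := tang hLb hab hy1'.
  lra.
Qed.


Definition blk (f : 'I_k -> 'I_B -> R) b :=
  f (ib b) b + \sum_(i < k | (i != ib b) && (i != istar)) f i b.

Lemma sq_div_eq0 (x L : R) : 0 < L -> x ^+ 2 / L = 0 -> x = 0.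
Proof.
move=> hL /eqP; rewrite mulf_eq0 invr_eq0 (gt_eqF hL) orbF expf_eq0 /=.
by move/eqP.
Qed.

Lemma blk_lt a c b : (forall i b, 0 <= a i b) -> (forall i b, 0 <= c i b) ->
  a (ib b) b ^+ 2 / lam (ib b) b ^+ 2 =
    \sum_(i < k | (i != ib b) && (i != istar)) a i b ^+ 2 / lam i b ^+ 2 ->
  (forall i, (i != ib b) && (i != istar) -> Gf a i b < Gf c i b) ->
  (exists i, (i != ib b) && (i != istar)) -> blk a b < blk c b.
Proof.
move=> ha0 hc0 hbal hG [i0 hi0].
have hlam0 : forall i b, 0 <= lam i b by move=> i' b'; exact: ltW.
have hSc : 0 <= \sum_(i < k | (i != ib b) && (i != istar)) c i b by apply: sumr_ge0.
have hSa : 0 <= \sum_(i < k | (i != ib b) && (i != istar)) a i b by apply: sumr_ge0.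
have hGc : forall i, (i != ib b) && (i != istar) -> 0 < a i b -> 0 < a (ib b) b ->
    0 < c i b /\ 0 < c (ib b) b.
  move=> i hi hai hab; have /andP[hi1 _] := hi.
  have hGa := G_gt0 hi1 hai hab.
  have hne : Gf c i b != 0 by rewrite gt_eqF // (lt_trans hGa) // hG.
  have [h1 h2] := G_ne0 hne.
  by rewrite !lt_def h1 h2 !hc0.
have hcb : 0 < c (ib b) b.
  have hGa : 0 <= Gf a i0 b by apply: G_ge0.
  have hne : Gf c i0 b != 0 by rewrite gt_eqF // (le_lt_trans hGa) // hG.
  have [_ h2] := G_ne0 hne.
  by rewrite lt_def h2 hc0.
rewrite /blk.
have [e0|ne0] := eqVneq (a (ib b) b) 0.
  have hz : forall i, (i != ib b) && (i != istar) -> a i b = 0.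
    move=> i hi; apply: (@sq_div_eq0 _ (lam i b ^+ 2)); first exact: L2_gt0.
    move: i hi; apply/psumr_eq0P; first by move=> i _; rewrite divr_ge0 ?exprn_ge0.
    by rewrite -hbal e0 expr0n mul0r.
  rewrite e0 big1 // add0r; lra.
have hab : 0 < a (ib b) b by rewrite lt_def ne0 ha0.
set ab := a (ib b) b in hab hbal *.
set cb := c (ib b) b in hcb hGc *.
set Lb := lam (ib b) b ^+ 2 in hbal *.
have hLb : 0 < Lb by exact: L2_gt0.
set Q := \sum_(i < k | _) _ in hbal.
have [i1 hi1 hai1] : exists2 i1, (i1 != ib b) && (i1 != istar) & 0 < a i1 b.
  case: (boolP [exists i, ((i != ib b) && (i != istar)) && (a i b != 0)]).
    by move=> /existsP[i /andP[hi hne]]; exists i => //; rewrite lt_def hne ha0.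
  move=> /existsPn hn; exfalso.
  have : Q = 0.
    apply: big1 => i hi; move: (hn i); rewrite hi /= negbK => /eqP ->.
    by rewrite expr0n mul0r.
  by rewrite -hbal => /(sq_div_eq0 hLb) /eqP; rewrite (negbTE ne0).
set w := fun i => a i b ^+ 2 / lam i b ^+ 2.
have hw0 : forall i, 0 <= w i by move=> i; rewrite /w divr_ge0 ?exprn_ge0.
have Ha : \sum_(i < k | (i != ib b) && (i != istar)) w i * den c i b <
          \sum_(i < k | (i != ib b) && (i != istar)) w i * den a i b.
  rewrite (bigD1 i1) //= [X in _ < X](bigD1 i1) //=.
  apply: ltr_leD.
    have [hc1 _] := hGc i1 hi1 hai1 hab.
    have /andP[hi1' _] := hi1.
    rewrite ltr_pM2l; last by rewrite /w divr_gt0 ?exprn_gt0 ?L2_gt0.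
    by rewrite -Glt_den // hG.
  apply: ler_sum => i /andP[hi _].
  have [e|ne] := eqVneq (a i b) 0.
    by rewrite /w e expr0n !mul0r.
  have hai : 0 < a i b by rewrite lt_def ne ha0.
  have [hc1 _] := hGc i hi hai hab.
  have /andP[hi' _] := hi.
  rewrite ler_wpM2l // ltW // -Glt_den // hG //.
have Hb : \sum_(i < k | (i != ib b) && (i != istar)) w i * den a i b =
          \sum_(i < k | (i != ib b) && (i != istar)) a i b + ab.
  rewrite (eq_bigr (fun i => a i b + w i * (Lb / ab))); last first.
    move=> i _; rewrite /w /den -/ab -/Lb.
    have [e|ne] := eqVneq (a i b) 0; first by rewrite e expr0n !mul0r add0r.
    field; rewrite ne gt_eqF ?L2_gt0 ?gt_eqF //.
  rewrite big_split /= -mulr_suml -/Q -hbal; congr (_ + _); field.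
  by rewrite gt_eqF ?gt_eqF.
set K := 2 * Lb / ab - Lb * cb / ab ^+ 2.
have Hc : \sum_(i < k | (i != ib b) && (i != istar)) (2 * a i b - c i b + w i * K) <=
          \sum_(i < k | (i != ib b) && (i != istar)) w i * den c i b.
  apply: ler_sum => i hi.
  have [e|ne] := eqVneq (a i b) 0.
    have -> : w i = 0 by rewrite /w e expr0n mul0r.
    rewrite e !mul0r mulr0 addr0 sub0r lerNl oppr0; exact: hc0.
  have hai : 0 < a i b by rewrite lt_def ne ha0.
  have [hc1 _] := hGc i hi hai hab.
  rewrite -subr_ge0 /den -/cb.
  have -> : w i * (lam i b ^+ 2 / c i b + Lb / cb) - (2 * a i b - c i b + w i * K) =
     (a i b - c i b) ^+ 2 / c i b + w i * (Lb * (ab - cb) ^+ 2 / (ab ^+ 2 * cb)).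
    rewrite /w /K; field.
    by rewrite !gt_eqF ?L2_gt0.
  apply: addr_ge0; first by rewrite divr_ge0 ?sqr_ge0 ?ltW.
  apply: mulr_ge0 => //; apply: divr_ge0; first by rewrite mulr_ge0 ?sqr_ge0 ?ltW.
  by rewrite mulr_ge0 ?sqr_ge0 ?ltW.
rewrite big_split /= sumrB -mulr_suml -mulr_sumr -/Q -hbal in Hc.
have HK : ab ^+ 2 / Lb * K = 2 * ab - cb.
  by rewrite /K; field; rewrite !gt_eqF.
rewrite HK in Hc.
lra.
Qed.


Lemma blk_le a c b : (forall i b, 0 <= a i b) -> (forall i b, 0 <= c i b) ->
  a (ib b) b ^+ 2 / lam (ib b) b ^+ 2 =
    \sum_(i < k | (i != ib b) && (i != istar)) a i b ^+ 2 / lam i b ^+ 2 ->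
  (forall i, (i != ib b) && (i != istar) -> Gf a i b < Gf c i b) ->
  blk a b <= blk c b.
Proof.
move=> ha0 hc0 hbal hG.
case: (boolP [exists i, (i != ib b) && (i != istar)]) => [/existsP[i hi]|/existsPn hn].
  by apply: ltW; apply: blk_lt => //; exists i.
have E : forall f : 'I_k -> R, \sum_(i < k | (i != ib b) && (i != istar)) f i = 0.
  by move=> f; apply: big1 => i hi; move: (hn i); rewrite hi.
rewrite E in hbal.
rewrite /blk !E (sq_div_eq0 (L2_gt0 (ib b) b) hbal) add0r addr0; exact: hc0.
Qed.

Lemma col_decomp (f : 'I_k -> 'I_B -> R) b : \sum_(i < k) f i b =
  blk f b + \sum_(i < k | (i != ib b) && ~~ (i != istar)) f i b.
Proof. by rewrite (bigD1 (ib b)) //= (bigID (fun i => i != istar)) /= /blk addrA. Qed.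

Lemma main_sec a : feasible a ->
  (opt a <->
   [/\ (forall b : 'I_B,
          a (ib b) b ^+ 2 / lam (ib b) b ^+ 2 =
          \sum_(i < k | (i != ib b) && (i != istar)) a i b ^+ 2 / lam i b ^+ 2),
       (forall x z, Xi x -> Xi z -> WGf a x = WGf a z)
     & (forall b : 'I_B, ib b != istar -> a istar b = 0)]).
Proof.
move=> ha; split.
  by move=> ho; split; [exact: nec1 | exact: nec2 | exact: nec3].
case=> h1 h2 h3; split => // c hc.
have [hsa ha0] := ha; have [hsc hc0] := hc.
case: (boolP [exists x, Xi x && (WGf c x <= WGf a x)]).
  move=> /existsP[x /andP[hx hle]]; exists x => // z hz.
  by rewrite -(h2 x z hx hz).
move=> /existsPn hn; exfalso.
have hG : forall b i, (i != ib b) && (i != istar) -> Gf a i b < Gf c i b.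
  move=> b i hi; have hx : Xi (i, b) by rewrite /inXi /= andbC.
  by move: (hn (i, b)); rewrite hx /= -ltNge /WG /= ltr_pM2l ?W_gt0.
have Ea : SS a = \sum_(b < B) blk a b.
  rewrite exchange_big /=; apply: eq_bigr => b _; rewrite col_decomp big1 ?addr0 //.
  move=> i /andP[hi1 /negPn/eqP hi2]; rewrite hi2 in hi1 *.
  by apply: h3; rewrite eq_sym.
have Ec : \sum_(b < B) blk c b <= SS c.
  rewrite exchange_big /=; apply: ler_sum => b _; rewrite col_decomp lerDl.
  by apply: sumr_ge0 => i _; exact: hc0.
have [bs hbs] := ex_bstar; have [j hj] := ex_j.
have Hlt : \sum_(b < B) blk a b < \sum_(b < B) blk c b.
  rewrite (bigD1 bs) //= [X in _ < X](bigD1 bs) //=.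
  apply: ltr_leD.
    by apply: (blk_lt ha0 hc0 (h1 bs) (hG bs)); exists j; rewrite hbs hj.
  by apply: ler_sum => b _; apply: (blk_le ha0 hc0 (h1 b) (hG b)).
move: Hlt Ec; rewrite -Ea hsa hsc; lra.
Qed.

End Proof3.

Theorem theorem3 (R : realFieldType) (k B : nat)
  (p : 'I_B -> R) (y lam : 'I_k -> 'I_B -> R)
  (ib : 'I_B -> 'I_k) (istar : 'I_k)
  (hk : (2 <= k)%N)
  (hp : forall b, 0 < p b) (hpsum : \sum_(b < B) p b = 1)
  (hlam : forall i b, 0 < lam i b)
  (hib : forall b i, i != ib b -> y (ib b) b < y i b)
  (histar : forall j, j != istar -> mass p ib j < mass p ib istar)
  (alpha : 'I_k -> 'I_B -> R) :
  feasible alpha ->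
  (optimal p y lam ib istar alpha <->
   [/\ (forall b : 'I_B,
          alpha (ib b) b ^+ 2 / lam (ib b) b ^+ 2 =
          \sum_(i < k | (i != ib b) && (i != istar)) alpha i b ^+ 2 / lam i b ^+ 2),
       (forall x z, inXi ib istar x -> inXi ib istar z ->
          WG p y lam ib istar alpha x = WG p y lam ib istar alpha z)
     & (forall b : 'I_B, ib b != istar -> alpha istar b = 0)]).
Proof.
move=> ha; exact: (main_sec hk hp hpsum hlam hib histar ha).
Qed.
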